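(* Let $d,k\geq2$. Suppose that $\Lambda\leq\mathrm{AAut}(\mathcal{T}_{d,k})$ contains a translation and that $G\leq\mathrm{AAut}(\mathcal{T}_{d,k})$ commensurates $\Lambda$. Then there exists a proper ball $B\subseteq\partial\mathcal{T}_{d,k}$ such that $[G_B,G_B]\leq\Lambda$. If additionally $L\leq[G_B,G_B]$ is a subgroup with no proper finite index subgroup, then $\Lambda$ contains the subgroup generated by all $G$-conjugates of $L$.
   Context: $\mathcal{T}_{d,k}$ is the rooted tree whose root $r$ has degree $k$ and all other vertices have degree $d+1$. Its boundary $\partial\mathcal{T}_{d,k}$ is the set of rays $(r=\xi_0,\xi_1,\dots)$ with $\xi_{n+1}$ a child of $\xi_n$; with $N(\xi,\xi')$ the largest $n$ such that $\xi_n=\xi'_n$, put $\mathrm{dist}(\xi,\xi')=d^{-N(\xi,\xi')}$. A homothety is a map multiplying all distances by a fixed positive constant. An almost automorphism is a homeomorphism $g$ of $\partial\mathcal{T}_{d,k}$ for which there is a partition of $\partial\mathcal{T}_{d,k}$ into finitely many proper balls $B_1,\dots,B_n$ with each $g|_{B_i}:B_i\to g(B_i)$ a homothety; $\mathrm{AAut}(\mathcal{T}_{d,k})$ is the group of almost automorphisms. An element $h$ is a translation if there is a ball $B$ and $n\in\mathbb{Z}$ with $h^n|_B:B\to h^n(B)$ a homothety and $h^n(B)\subsetneq B$. For a ball $B$, $G_B$ denotes the subgroup of elements of $G$ acting trivially on $\partial\mathcal{T}_{d,k}\setminus B$. $G$ commensurates $\Lambda$ if $g\Lambda g^{-1}\cap\Lambda$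 has finite index in $\Lambda$ for all $g\in G$. *)

(* Defs.v *)
From Stdlib Require Import Reals ClassicalEpsilon ZArith List.
Set Implicit Arguments.

(* Boundary of T_{d,k}: a ray (r = xi_0, xi_1, ...) is encoded by the
   sequence of child indices: x 0 < k (children of the root),
   x (S n) < d (children of a non-root vertex).  xi_n is determined by
   x 0, ..., x (n-1). *)
Definition Ray (d k : nat) : Type :=
  {x : nat -> nat | (x 0 < k)%nat /\ forall n, (x (S n) < d)%nat}.

Definition rv {d k : nat} (x : Ray d k) : nat -> nat := proj1_sig x.

(* xi_n = xi'_n *)
Definition agree {d k : nat} (n : nat) (x y : Ray d k) : Prop :=
  forall i, (i < n)%nat -> rv x i = rv y i.

Definition is_dist {d k : nat} (x y : Ray d k) (r : R) : Prop :=
  (x = y /\ r = 0%R) \/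
  (x <> y /\ exists n, agree n x y /\ ~ agree (S n) x y /\ r = (/ (INR d ^ n))%R).

Definition dist {d k : nat} (x y : Ray d k) : R :=
  epsilon (inhabits 0%R) (is_dist x y).

Definition ball {d k : nat} (B : Ray d k -> Prop) : Prop :=
  exists x r, (0 < r)%R /\ forall y, B y <-> (dist x y <= r)%R.

Definition proper_ball {d k : nat} (B : Ray d k -> Prop) : Prop :=
  ball B /\ exists x, ~ B x.

Definition homothety_on {d k : nat} (B : Ray d k -> Prop) (g : Ray d k -> Ray d k) : Prop :=
  exists c, (0 < c)%R /\
    forall x y, B x -> B y -> dist (g x) (g y) = (c * dist x y)%R.

Definition continuous_map {d k : nat} (g : Ray d k -> Ray d k) : Prop :=
  forall x eps, (0 < eps)%R -> exists delta, (0 < delta)%R /\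
    forall y, (dist x y < delta)%R -> (dist (g x) (g y) < eps)%R.

Definition homeo {d k : nat} (g : Ray d k -> Ray d k) : Prop :=
  exists h, (forall x, h (g x) = x) /\ (forall x, g (h x) = x) /\
    continuous_map g /\ continuous_map h.

Definition AAut {d k : nat} (g : Ray d k -> Ray d k) : Prop :=
  homeo g /\
  exists (n : nat) (Bs : nat -> Ray d k -> Prop),
    (forall i, (i < n)%nat -> proper_ball (Bs i) /\ homothety_on (Bs i) g) /\
    (forall x, exists i, (i < n)%nat /\ Bs i x /\
                 forall j, (j < n)%nat -> Bs j x -> j = i).

Definition comp {d k : nat} (g h : Ray d k -> Ray d k) : Ray d k -> Ray d k :=
  fun x => g (h x).

Definition finv {d k : nat} (g : Ray d k -> Ray d k) : Ray d k -> Ray d k :=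
  epsilon (inhabits (fun x : Ray d k => x))
    (fun h => (forall x, h (g x) = x) /\ (forall x, g (h x) = x)).

Fixpoint npow {d k : nat} (g : Ray d k -> Ray d k) (n : nat) : Ray d k -> Ray d k :=
  match n with
  | O => fun x => x
  | S m => comp g (npow g m)
  end.

Definition zpow {d k : nat} (g : Ray d k -> Ray d k) (n : Z) : Ray d k -> Ray d k :=
  match n with
  | Z0 => fun x => x
  | Zpos p => npow g (Pos.to_nat p)
  | Zneg p => npow (finv g) (Pos.to_nat p)
  end.

Definition image {d k : nat} (f : Ray d k -> Ray d k) (B : Ray d k -> Prop) : Ray d k -> Prop :=
  fun y => exists x, B x /\ y = f x.

Definition strict_subset {d k : nat} (A B : Ray d k -> Prop) : Prop :=
  (forall y, A y -> B y) /\ exists y, B y /\ ~ A y.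

Definition translation {d k : nat} (h : Ray d k -> Ray d k) : Prop :=
  exists (B : Ray d k -> Prop) (n : Z),
    ball B /\ homothety_on B (zpow h n) /\ strict_subset (image (zpow h n) B) B.

Definition gset (d k : nat) := (Ray d k -> Ray d k) -> Prop.

Definition subset {d k : nat} (H K : gset d k) : Prop := forall g, H g -> K g.

Definition subgroup {d k : nat} (H : gset d k) : Prop :=
  (forall g, H g -> AAut g) /\
  H (fun x => x) /\
  (forall g h, H g -> H h -> H (comp g h)) /\
  (forall g, H g -> H (finv g)).

Definition finite_index {d k : nat} (H K : gset d k) : Prop :=
  exists reps : list (Ray d k -> Ray d k),
    (forall t, In t reps -> K t) /\
    forall g, K g -> exists t, In t reps /\ exists h, H h /\ g = comp t h.

Definition commensurates {d k : nat} (G Lam : gset d k) : Prop :=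
  forall g, G g ->
    finite_index (fun x => Lam x /\ Lam (comp (finv g) (comp x g))) Lam.

Definition gen {d k : nat} (S : gset d k) : gset d k :=
  fun x => forall H, subgroup H -> subset S H -> H x.

Definition rigid_stab {d k : nat} (G : gset d k) (B : Ray d k -> Prop) : gset d k :=
  fun g => G g /\ forall x, ~ B x -> g x = x.

Definition commutator_subgroup {d k : nat} (H : gset d k) : gset d k :=
  gen (fun x => exists a b, H a /\ H b /\
         x = comp a (comp b (comp (finv a) (finv b)))).

Definition no_proper_finite_index_subgroup {d k : nat} (L : gset d k) : Prop :=
  forall M, subgroup M -> subset M L -> finite_index M L -> subset L M.

Definition conj_closure {d k : nat} (G L : gset d k) : gset d k :=
  gen (fun x => exists g l, G g /\ L l /\ x = comp g (comp l (finv g))).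

(* Main.v *)
From Pilot Require Import Defs.
From Stdlib Require Import Reals ClassicalEpsilon ZArith List.
From Stdlib Require Import Classical FunctionalExtensionality ProofIrrelevance Lia Lra.
Import Pilot.Defs.

Definition bij {d k : nat} (g : Ray d k -> Ray d k) : Prop :=
  exists h, (forall x, h (g x) = x) /\ (forall x, g (h x) = x).

Lemma finv_spec {d k} (g : Ray d k -> Ray d k) : bij g ->
  (forall x, finv g (g x) = x) /\ (forall x, g (finv g x) = x).
Proof. intros H. unfold finv.
  exact (epsilon_spec (inhabits (fun x => x)) (fun h => (forall x, h (g x) = x) /\ (forall x, g (h x) = x)) H). Qed.

Lemma finv_l {d k} (g : Ray d k -> Ray d k) : bij g -> forall x, finv g (g x) = x.
Proof. intros H; apply (finv_spec g H). Qed.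
Lemma finv_r {d k} (g : Ray d k -> Ray d k) : bij g -> forall x, g (finv g x) = x.
Proof. intros H; apply (finv_spec g H). Qed.

Lemma AAut_bij {d k} (g : Ray d k -> Ray d k) : AAut g -> bij g.
Proof. intros [[h [H1 [H2 _]]] _]. exists h; auto. Qed.

Lemma finv_unique {d k} (g h : Ray d k -> Ray d k) : bij g -> (forall x, h (g x) = x) -> finv g = h.
Proof. intros Hb Hh. extensionality x. rewrite <- (Hh (finv g x)), (finv_r g Hb). reflexivity. Qed.

Lemma bij_comp {d k} (g h : Ray d k -> Ray d k) : bij g -> bij h -> bij (comp g h).
Proof. intros Hg Hh. exists (comp (finv h) (finv g)); unfold comp; split; intros x.
  - rewrite (finv_l g Hg), (finv_l h Hh); auto.
  - rewrite (finv_r h Hh), (finv_r g Hg); auto. Qed.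

Lemma bij_finv {d k} (g : Ray d k -> Ray d k) : bij g -> bij (finv g).
Proof. intros Hg. exists g; split; intros x; [apply finv_r|apply finv_l]; auto. Qed.

Lemma finv_finv {d k} (g : Ray d k -> Ray d k) : bij g -> finv (finv g) = g.
Proof. intros Hg. apply finv_unique. apply bij_finv; auto. apply finv_r; auto. Qed.

Lemma bij_inj {d k} (g : Ray d k -> Ray d k) : bij g -> forall x y, g x = g y -> x = y.
Proof. intros Hg x y E. rewrite <- (finv_l g Hg x), <- (finv_l g Hg y), E; auto. Qed.

Lemma sub_bij {d k} (H : gset d k) g : subgroup H -> H g -> bij g.
Proof. intros [A _] Hg. apply AAut_bij, A, Hg. Qed.
Lemma sub_id {d k} (H : gset d k) : subgroup H -> H (fun x => x).
Proof. intros [_ [A _]]; exact A. Qed.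
Lemma sub_comp {d k} (H : gset d k) g h : subgroup H -> H g -> H h -> H (comp g h).
Proof. intros [_ [_ [A _]]]; apply A. Qed.
Lemma sub_finv {d k} (H : gset d k) g : subgroup H -> H g -> H (finv g).
Proof. intros [_ [_ [_ A]]]; apply A. Qed.

Lemma npow_add {d k} (g : Ray d k -> Ray d k) m n x : npow g (m + n) x = npow g m (npow g n x).
Proof. induction m; simpl; unfold comp; congruence. Qed.

Lemma npow_S' {d k} (g : Ray d k -> Ray d k) n x : npow g (S n) x = npow g n (g x).
Proof. replace (S n) with (n + 1)%nat by lia. rewrite npow_add. reflexivity. Qed.

Lemma sub_npow {d k} (H : gset d k) g n : subgroup H -> H g -> H (npow g n).
Proof. intros Hs Hg; induction n; simpl. apply sub_id; auto. apply sub_comp; auto. Qed.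

Lemma npow_inv {d k} (g : Ray d k -> Ray d k) : bij g -> forall n x,
  npow g n (npow (finv g) n x) = x /\ npow (finv g) n (npow g n x) = x.
Proof. intros Hg n; induction n; intros x; [simpl; auto|]. split.
  - rewrite npow_S'. change (npow (finv g) (S n) x) with (finv g (npow (finv g) n x)). rewrite (finv_r g Hg). apply IHn.
  - rewrite npow_S'. change (npow g (S n) x) with (g (npow g n x)). rewrite (finv_l g Hg). apply IHn. Qed.

Lemma sub_zpow {d k} (H : gset d k) g n : subgroup H -> H g -> H (zpow g n).
Proof. intros Hs Hg. destruct n; simpl. apply sub_id; auto. apply sub_npow; auto.
  apply sub_npow; auto. apply sub_finv; auto. Qed.

Lemma memE {d k} (H : gset d k) g h : (forall x, g x = h x) -> H g -> H h.
Proof. intros E Hg. replace h with g; auto. extensionality x; auto. Qed.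

Definition Kc {d k} (Lam : gset d k) (g : Ray d k -> Ray d k) : gset d k :=
  fun x => Lam x /\ Lam (comp g (comp x (finv g))).

Lemma Kc_id {d k} (Lam : gset d k) g : subgroup Lam -> bij g -> Kc Lam g (fun x => x).
Proof. intros Hs Hg. split. apply sub_id; auto. eapply memE; [|apply (sub_id Lam Hs)].
  intros x; unfold comp; rewrite finv_r; auto. Qed.

Lemma Kc_comp {d k} (Lam : gset d k) g x y : subgroup Lam -> bij g -> Kc Lam g x -> Kc Lam g y -> Kc Lam g (comp x y).
Proof. intros Hs Hg [A1 A2] [B1 B2]. split. apply sub_comp; auto.
  eapply memE; [|apply (sub_comp Lam _ _ Hs A2 B2)]. intros z; unfold comp. rewrite finv_l; auto. Qed.

Lemma Kc_finv {d k} (Lam : gset d k) g x : subgroup Lam -> bij g -> Kc Lam g x -> Kc Lam g (finv x).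
Proof. intros Hs Hg [A1 A2]. split. apply sub_finv; auto.
  eapply memE; [|apply (sub_finv Lam _ Hs A2)]. intros z.
  assert (bx : bij x) by (apply (sub_bij Lam); auto).
  rewrite finv_unique with (h := comp g (comp (finv x) (finv g))). reflexivity.
  apply bij_comp; auto. apply bij_comp; auto. apply bij_finv; auto.
  intros w; unfold comp. rewrite finv_l, finv_l, finv_r; auto. Qed.

Lemma php_fun (N : nat) (g : nat -> nat) : (forall i, (i <= N)%nat -> (g i < N)%nat) ->
  exists i j, (i < j <= N)%nat /\ g i = g j.
Proof.
  revert g; induction N; intros g Hg.
  - specialize (Hg 0%nat (le_n 0)). lia.
  - destruct (classic (exists i, (i <= N)%nat /\ g i = g (S N))) as [[i [Hi E]]|Hn].
    + exists i, (S N); split; [lia|auto].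
    + destruct (Nat.eq_dec (g (S N)) N) as [E|E].
      * destruct (IHN g) as [i [j [Hij E2]]].
        { intros i Hi. assert (g i < S N)%nat by (apply Hg; lia).
          destruct (Nat.eq_dec (g i) N); [|lia]. exfalso; apply Hn; exists i; split; congruence. }
        exists i, j; split; [lia|auto].
      * set (g' := fun i => if Nat.eq_dec (g i) N then g (S N) else g i).
        destruct (IHN g') as [i [j [Hij E2]]].
        { intros i Hi. unfold g'. assert (g (S N) < S N)%nat by (apply Hg; lia).
          assert (g i < S N)%nat by (apply Hg; lia).
          destruct (Nat.eq_dec (g i) N); lia. }
        unfold g' in E2.
        destruct (Nat.eq_dec (g i) N), (Nat.eq_dec (g j) N).
        -- exists i, j; split; [lia|congruence].
        -- exfalso; apply Hn; exists j; split; [lia|auto].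
        -- exfalso; apply Hn; exists i; split; [lia|auto].
        -- exists i, j; split; [lia|auto].
Qed.

Lemma php (N : nat) (P : nat -> nat -> Prop) : (forall i, (i <= N)%nat -> exists n, (n < N)%nat /\ P i n) ->
  exists i j n, (i < j <= N)%nat /\ (n < N)%nat /\ P i n /\ P j n.
Proof.
  intros H. set (g := fun i => epsilon (inhabits 0%nat) (fun n => (n < N)%nat /\ P i n)).
  assert (Hg : forall i, (i <= N)%nat -> (g i < N)%nat /\ P i (g i)).
  { intros i Hi. unfold g. apply (epsilon_spec (inhabits 0%nat) (fun n => (n < N)%nat /\ P i n)). auto. }
  destruct (php_fun N g) as [i [j [Hij E]]]. intros i Hi; apply Hg; auto.
  exists i, j, (g i). split; auto. split. apply Hg; lia. split. apply Hg; lia. rewrite E. apply Hg; lia.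
Qed.
Local Open Scope R_scope.

Lemma ray_eq {d k} (x y : Ray d k) : (forall i, rv x i = rv y i) -> x = y.
Proof. destruct x as [x px], y as [y py]; unfold rv; simpl; intros E.
  assert (x = y) by (extensionality i; auto). subst. f_equal. apply proof_irrelevance. Qed.

Lemma least_nat (P : nat -> Prop) : (exists n, P n) -> exists j, P j /\ forall i, P i -> (j <= i)%nat.
Proof.
  intros [n Hn]. revert Hn. induction n as [n IH] using lt_wf_ind. intros Hn.
  destruct (classic (exists i, (i < n)%nat /\ P i)) as [[i [Hi Pi]]|Hno].
  - exact (IH i Hi Pi).
  - exists n; split; auto. intros i Pi. destruct (le_lt_dec n i); auto. exfalso; apply Hno; eauto.
Qed.

Lemma agree_refl {d k} n (x : Ray d k) : agree n x x.
Proof. intros i _; auto. Qed.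
Lemma agree_sym {d k} n (x y : Ray d k) : agree n x y -> agree n y x.
Proof. intros H i Hi; symmetry; auto. Qed.
Lemma agree_trans {d k} n (x y z : Ray d k) : agree n x y -> agree n y z -> agree n x z.
Proof. intros H1 H2 i Hi; rewrite H1; auto. Qed.
Lemma agree_le {d k} m n (x y : Ray d k) : (m <= n)%nat -> agree n x y -> agree m x y.
Proof. intros Hmn H i Hi; apply H; lia. Qed.

Lemma first_diff {d k} (x y : Ray d k) : x <> y -> exists n, agree n x y /\ ~ agree (S n) x y.
Proof.
  intros Hne. assert (Ex : exists i, rv x i <> rv y i).
  { apply NNPP; intros Hn; apply Hne, ray_eq; intros i. apply NNPP; intros Hi; apply Hn; eauto. }
  destruct (least_nat _ Ex) as [j [Pj Hj]]. exists j; split.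
  - intros i Hi. apply NNPP; intros Hi'. specialize (Hj i Hi'). lia.
  - intros Ha. apply Pj, Ha. lia.
Qed.

Lemma dist_spec {d k} (x y : Ray d k) : is_dist x y (dist x y).
Proof.
  unfold dist. apply epsilon_spec.
  destruct (classic (x = y)) as [E|E].
  - exists 0; left; auto.
  - destruct (first_diff x y E) as [n [H1 H2]]. exists (/ (INR d ^ n)); right; split; auto. exists n; auto.
Qed.

Lemma D_ge2 d : (2 <= d)%nat -> 2 <= INR d.
Proof. intros H. apply le_INR in H. simpl in H. lra. Qed.

Lemma Dpow_pos d n : (2 <= d)%nat -> 0 < INR d ^ n.
Proof. intros H. apply pow_lt. pose proof (D_ge2 d H); lra. Qed.

Lemma inv_pow_le d m n : (2 <= d)%nat -> (m <= n)%nat -> / INR d ^ n <= / INR d ^ m.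
Proof. intros H Hmn. apply Rinv_le_contravar. apply Dpow_pos; auto.
  apply Rle_pow; auto. pose proof (D_ge2 d H); lra. Qed.

Lemma inv_pow_le_rev d m n : (2 <= d)%nat -> / INR d ^ n <= / INR d ^ m -> (m <= n)%nat.
Proof. intros H Hl. destruct (le_lt_dec m n) as [|Hlt]; auto. exfalso.
  assert (INR d ^ n < INR d ^ m) by (apply Rlt_pow; auto; pose proof (D_ge2 d H); lra).
  assert (/ INR d ^ m < / INR d ^ n). { apply Rinv_lt_contravar; auto.
    apply Rmult_lt_0_compat; apply Dpow_pos; auto. }
  lra. Qed.

Lemma agree_dist {d k} (Hd : (2 <= d)%nat) j (x y : Ray d k) : agree j x y <-> dist x y <= / INR d ^ j.
Proof.
  destruct (dist_spec x y) as [[E E2]|[E [n [H1 [H2 E2]]]]].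
  - subst. rewrite E2. split; intros _. left; apply Rinv_0_lt_compat, Dpow_pos; auto. apply agree_refl.
  - rewrite E2. split; intros H.
    + apply inv_pow_le; auto. destruct (le_lt_dec j n); auto. exfalso; apply H2. apply (agree_le _ j); auto.
    + apply (agree_le _ n); auto. apply (inv_pow_le_rev d); auto.
Qed.

Lemma dist_cases {d k} (x y : Ray d k) : dist x y = 0 \/ exists n, dist x y = / INR d ^ n.
Proof. destruct (dist_spec x y) as [[E E2]|[E [n [H1 [H2 E2]]]]]; auto. right; eauto. Qed.

Lemma dist_nonneg {d k} (Hd : (2 <= d)%nat) (x y : Ray d k) : 0 <= dist x y.
Proof. destruct (dist_cases x y) as [E|[n E]]; rewrite E. lra. left; apply Rinv_0_lt_compat, Dpow_pos; auto. Qed.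

Lemma arch_pow d e : (2 <= d)%nat -> 0 < e -> exists n, / INR d ^ n <= e.
Proof. intros Hd He. pose proof (D_ge2 d Hd).
  destruct (Pow_x_infinity (INR d)) with (b := / e) as [N HN]. rewrite Rabs_pos_eq; lra.
  exists N. specialize (HN N (le_n N)). rewrite Rabs_pos_eq in HN by (left; apply Dpow_pos; auto).
  rewrite <- (Rinv_inv e). apply Rinv_le_contravar. apply Rinv_0_lt_compat; auto. lra. Qed.

Lemma scale_pow d c L : (2 <= d)%nat -> 0 < c -> exists L', c * / INR d ^ L' <= / INR d ^ L.
Proof. intros Hd Hc. assert (P : 0 < / INR d ^ L * / c).
  { apply Rmult_lt_0_compat; apply Rinv_0_lt_compat; auto. apply Dpow_pos; auto. }
  destruct (arch_pow d _ Hd P) as [L' HL']. exists L'.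
  apply Rle_trans with (c * (/ INR d ^ L * / c)). apply Rmult_le_compat_l; lra.
  right. rewrite Rmult_comm, Rmult_assoc, Rinv_l, Rmult_1_r by lra. reflexivity. Qed.

Lemma ball_cyl {d k} (Hd : (2 <= d)%nat) (B : Ray d k -> Prop) : ball B ->
  exists c j, forall z, B z <-> agree j c z.
Proof.
  intros [c [r [Hr HB]]]. destruct (least_nat (fun n => / INR d ^ n <= r)) as [j [Pj Hj]].
  { apply arch_pow; auto. }
  exists c, j. intros z. rewrite HB, agree_dist by auto. split; intros H.
  - destruct (dist_cases c z) as [E|[n E]]; rewrite E in *.
    + left; apply Rinv_0_lt_compat, Dpow_pos; auto.
    + apply inv_pow_le; auto.
  - lra.
Qed.

Lemma rv0 {d k} (x : Ray d k) : (rv x 0 < k)%nat.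
Proof. destruct x as [x [p q]]; exact p. Qed.
Lemma rvS {d k} (x : Ray d k) n : (rv x (S n) < d)%nat.
Proof. destruct x as [x [p q]]; exact (q n). Qed.

Lemma cyl_proper {d k} (Hd : (2 <= d)%nat) (Hk : (2 <= k)%nat) j (y : Ray d k) : (1 <= j)%nat ->
  proper_ball (fun z => agree j y z).
Proof.
  intros Hj. split.
  - exists y, (/ INR d ^ j). split. apply Rinv_0_lt_compat, Dpow_pos; auto.
    intros z; apply agree_dist; auto.
  - set (fz := fun i : nat => match i with O => if Nat.eq_dec (rv y 0) 0 then 1%nat else 0%nat | S _ => 0%nat end).
    assert (P : (fz 0 < k)%nat /\ forall n, (fz (S n) < d)%nat).
    { unfold fz; split. destruct (Nat.eq_dec (rv y 0) 0); lia. intros; lia. }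
    exists (exist _ fz P). intros Ha. specialize (Ha 0%nat ltac:(lia)). unfold rv in Ha; simpl in Ha.
    unfold fz in Ha. fold (rv y 0) in Ha. destruct (Nat.eq_dec (rv y 0) 0); lia.
Qed.
Local Close Scope R_scope.
Local Open Scope R_scope.

Lemma image_closed {d k} (Hd : (2 <= d)%nat) (B0 : Ray d k -> Prop) x0 j0
  (HB0 : forall z, B0 z <-> agree j0 x0 z) (f : Ray d k -> Ray d k) c (Hc : 0 < c)
  (Hh : forall x y, B0 x -> B0 y -> dist (f x) (f y) = c * dist x y) (y : Ray d k) :
  ~ image f B0 y -> exists t, forall z, agree t y z -> ~ image f B0 z.
Proof.
  intros Hy.
  assert (T1 : forall L, exists L', forall a b, B0 a -> B0 b -> agree L' (f a) (f b) -> agree L a b).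
  { intros L. destruct (scale_pow d (/ c) L Hd) as [L' HL']. apply Rinv_0_lt_compat; auto.
    exists L'. intros a b Ha Hb Hab. apply agree_dist; auto. apply agree_dist in Hab; auto.
    rewrite Hh in Hab by auto.
    apply Rle_trans with (/ c * / INR d ^ L'); auto.
    apply Rmult_le_reg_l with c; auto. rewrite <- Rmult_assoc, Rinv_r, Rmult_1_l by lra. auto. }
  assert (T2 : forall L, exists L', forall a b, B0 a -> B0 b -> agree L' a b -> agree L (f a) (f b)).
  { intros L. destruct (scale_pow d c L Hd) as [L' HL']; auto.
    exists L'. intros a b Ha Hb Hab. apply agree_dist; auto. apply agree_dist in Hab; auto.
    rewrite Hh by auto. apply Rle_trans with (c * / INR d ^ L'); auto. apply Rmult_le_compat_l; lra. }
  apply NNPP; intros Hn.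
  assert (Hex : forall t, exists x, B0 x /\ agree t y (f x)).
  { intros t. apply NNPP; intros Hn2. apply Hn. exists t. intros z Hz [x [Hx E]]. apply Hn2. exists x.
    subst; auto. }
  set (xs := fun t => epsilon (inhabits y) (fun x => B0 x /\ agree t y (f x))).
  assert (Hxs : forall t, B0 (xs t) /\ agree t y (f (xs t))).
  { intros t. apply (epsilon_spec (inhabits y) (fun x => B0 x /\ agree t y (f x))). auto. }
  assert (Cau : forall L, exists T, forall s u, (T <= s)%nat -> (T <= u)%nat -> agree L (xs s) (xs u)).
  { intros L. destruct (T1 L) as [L' HL']. exists L'. intros s u Hs Hu.
    apply HL'; try apply Hxs. apply (agree_trans _ _ y). apply agree_sym. apply (agree_le _ s); auto; apply Hxs.
    apply (agree_le _ u); auto; apply Hxs. }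
  set (Tf := fun L => epsilon (inhabits 0%nat) (fun T => forall s u, (T <= s)%nat -> (T <= u)%nat -> agree L (xs s) (xs u))).
  assert (HT : forall L s u, (Tf L <= s)%nat -> (Tf L <= u)%nat -> agree L (xs s) (xs u)).
  { intros L. apply (epsilon_spec (inhabits 0%nat) (fun T => forall s u, (T <= s)%nat -> (T <= u)%nat -> agree L (xs s) (xs u))). auto. }
  set (ld := fun i => rv (xs (Tf (S i))) i).
  assert (Hld : forall i s, (Tf (S i) <= s)%nat -> rv (xs s) i = ld i).
  { intros i s Hs. unfold ld. apply (HT (S i)); auto. }
  assert (P : (ld 0 < k)%nat /\ forall n, (ld (S n) < d)%nat).
  { split. apply rv0. intros n; apply rvS. }
  set (l := exist _ ld P : Ray d k).
  assert (Bl : B0 l).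
  { apply HB0. intros i Hi. unfold l, rv at 2; simpl. unfold ld.
    destruct (HB0 (xs (Tf (S i)))) as [H1 _]. apply H1; auto. apply Hxs. }
  assert (tail : forall n, exists s0, forall s, (s0 <= s)%nat -> agree n l (xs s)).
  { induction n. exists 0%nat; intros s _ i Hi; lia.
    destruct IHn as [s0 Hs0]. exists (Nat.max s0 (Tf (S n))). intros s Hs i Hi.
    destruct (Nat.eq_dec i n).
    - subst. unfold l, rv at 1; simpl. symmetry. apply Hld. lia.
    - apply (Hs0 s); lia. }
  apply Hy. exists l. split; auto. apply ray_eq. intros i.
  destruct (T2 (S i)) as [L' HL']. destruct (tail L') as [s0 Hs0].
  set (s := Nat.max s0 (S i)).
  assert (A1 : agree (S i) (f l) (f (xs s))). { apply HL'; auto. apply Hxs. apply Hs0. unfold s; lia. }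
  assert (A2 : agree s y (f (xs s))) by apply Hxs.
  rewrite (A2 i) by (unfold s; lia). symmetry. apply A1. lia.
Qed.
Local Close Scope R_scope.

Lemma wandering {d k} (Hd : (2 <= d)%nat) (Hk : (2 <= k)%nat) (Lam : gset d k) :
  subgroup Lam -> (exists h, Lam h /\ translation h) ->
  exists f, Lam f /\ exists B, proper_ball B /\
    forall p u, (1 <= p)%nat -> B u -> ~ B (npow f p u).
Proof.
  intros HL [h [Hh [B0 [n [Hb [[c [Hc Hhom]] [Hsub [y [By Hy]]]]]]]]].
  set (f := zpow h n). exists f. split. apply sub_zpow; auto.
  destruct (ball_cyl Hd B0 Hb) as [x0 [j0 HB0]].
  destruct (image_closed Hd B0 x0 j0 HB0 f c Hc Hhom y Hy) as [t Ht].
  exists (fun z => agree (S (t + j0)) y z). split. apply cyl_proper; auto; lia.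
  assert (InB0 : forall u, agree (S (t + j0)) y u -> B0 u).
  { intros u Hu. apply HB0. apply (agree_trans _ _ y). apply HB0; auto. apply (agree_le _ (S (t + j0))); auto; lia. }
  assert (Pow : forall q u, B0 u -> B0 (npow f q u)).
  { induction q; intros u Hu; simpl; auto. unfold comp. apply Hsub. exists (npow f q u); auto. }
  intros p u Hp Hu Hfu. destruct p as [|q]; [lia|].
  apply (Ht (npow f (S q) u)). apply (agree_le _ (S (t + j0))); auto; lia.
  exists (npow f q u). split; auto.
Qed.

Lemma commute_disj {d k} (g1 g2 : Ray d k -> Ray d k) (S T : Ray d k -> Prop) :
  bij g1 -> bij g2 -> (forall x, ~ S x -> g1 x = x) -> (forall x, ~ T x -> g2 x = x) ->
  (forall x, S x -> T x -> False) -> forall x, g1 (g2 x) = g2 (g1 x).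
Proof.
  intros B1 B2 H1 H2 D x.
  assert (P1 : forall z, S z -> S (g1 z)).
  { intros z Hz. apply NNPP; intros Hn. pose proof (H1 _ Hn) as E. apply bij_inj in E; auto. rewrite E in Hn; auto. }
  assert (P2 : forall z, T z -> T (g2 z)).
  { intros z Hz. apply NNPP; intros Hn. pose proof (H2 _ Hn) as E. apply bij_inj in E; auto. rewrite E in Hn; auto. }
  destruct (classic (S x)) as [Sx|Sx].
  - rewrite (H2 x) by (intros Tx; exact (D x Sx Tx)). rewrite (H2 (g1 x)); [reflexivity|].
    intros Tx. exact (D _ (P1 x Sx) Tx).
  - rewrite (H1 x Sx). destruct (classic (T x)) as [Tx|Tx].
    + rewrite (H1 (g2 x)); [reflexivity|]. intros Sy. exact (D _ Sy (P2 x Tx)).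
    + rewrite (H2 x Tx), (H1 x Sx); auto.
Qed.

Lemma conj_pow_exists {d k} (Lam G : gset d k) f a :
  subgroup Lam -> subgroup G -> commensurates G Lam -> Lam f -> G a ->
  exists p, (1 <= p)%nat /\ Lam (comp a (comp (npow f p) (finv a))).
Proof.
  intros HL HG Hcom Hf Ga. assert (ba : bij a) by (apply (sub_bij G); auto).
  destruct (Hcom (finv a) (sub_finv G a HG Ga)) as [reps [Hreps Hcov]].
  rewrite finv_finv in Hcov by auto.
  destruct (php (length reps) (fun i n => exists h, Kc Lam a h /\ npow f i = comp (nth n reps (fun x => x)) h))
    as [i [j [n [Hij [Hn [[h1 [K1 E1]] [h2 [K2 E2]]]]]]]].
  { intros i Hi. destruct (Hcov (npow f i) (sub_npow Lam f i HL Hf)) as [t [Ht [h [Kh E]]]].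
    destruct (In_nth reps t (fun x => x) Ht) as [n [Hn En]]. exists n; split; auto. exists h; split; auto.
    rewrite En; auto. }
  set (t := nth n reps (fun x => x)) in *.
  assert (bt : bij t). { apply (sub_bij Lam); auto. apply Hreps. unfold t; apply nth_In; lia. }
  assert (bh1 : bij h1) by (apply (sub_bij Lam); auto; apply K1).
  exists (j - i)%nat. split. lia.
  assert (E : forall x, npow f (j - i) x = finv h1 (h2 x)).
  { intros x. apply (bij_inj h1); auto. rewrite finv_r by auto. apply (bij_inj t); auto.
    change (t (h1 (npow f (j - i) x))) with (comp t h1 (npow f (j - i) x)). rewrite <- E1.
    change (t (h2 x)) with (comp t h2 x). rewrite <- E2. rewrite <- npow_add. f_equal. lia. }
  assert (K := Kc_comp Lam a _ _ HL ba (Kc_finv Lam a h1 HL ba K1) K2).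
  destruct K as [_ K]. eapply memE; [|exact K]. intros x; unfold comp. rewrite E; auto.
Qed.

Lemma conj_pow_mult {d k} (Lam : gset d k) f a p :
  subgroup Lam -> bij a -> Lam (comp a (comp (npow f p) (finv a))) ->
  forall q, Lam (comp a (comp (npow f (q * p)) (finv a))).
Proof.
  intros HL ba Hp q. induction q.
  - eapply memE; [|apply (sub_id Lam HL)]. intros x; simpl; unfold comp. rewrite finv_r; auto.
  - eapply memE; [|apply (sub_comp Lam _ _ HL Hp IHq)]. intros x. unfold comp.
    rewrite finv_l by auto. replace (S q * p)%nat with (p + q * p)%nat by lia. rewrite npow_add. auto.
Qed.

Lemma disj_S {d k} (f : Ray d k -> Ray d k) (B : Ray d k -> Prop) :
  bij f -> (forall p u, (1 <= p)%nat -> B u -> ~ B (npow f p u)) ->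
  forall i j x, i <> j -> B (npow (finv f) i x) -> B (npow (finv f) j x) -> False.
Proof.
  intros bf Hw.
  assert (L : forall i j x, (i < j)%nat -> B (npow (finv f) i x) -> B (npow (finv f) j x) -> False).
  { intros i j x Hij Hi Hj.
    assert (E : npow (finv f) j x = npow (finv f) (j - i) (npow (finv f) i x)).
    { rewrite <- npow_add. f_equal. lia. }
    apply (Hw (j - i)%nat (npow (finv f) j x)); auto. lia.
    rewrite E. rewrite (proj1 (npow_inv f bf (j - i) _)). auto. }
  intros i j x Hne Hi Hj. destruct (Nat.lt_total i j) as [H|[H|H]]; [eauto|lia|eauto].
Qed.

Lemma comm_in {d k} (Lam G : gset d k) f (B : Ray d k -> Prop) a b :
  subgroup Lam -> subgroup G -> commensurates G Lam -> Lam f ->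
  (forall p u, (1 <= p)%nat -> B u -> ~ B (npow f p u)) ->
  G a -> (forall x, ~ B x -> a x = x) -> G b -> (forall x, ~ B x -> b x = x) ->
  Lam (comp a (comp b (comp (finv a) (finv b)))).
Proof.
  intros HL HG Hcom Hf Hw Ga Ta Gb Tb.
  assert (ba : bij a) by (apply (sub_bij G); auto).
  assert (bb : bij b) by (apply (sub_bij G); auto).
  assert (bf : bij f) by (apply (sub_bij Lam); auto).
  destruct (conj_pow_exists Lam G f a HL HG Hcom Hf Ga) as [pa [Hpa La]].
  destruct (conj_pow_exists Lam G f b HL HG Hcom Hf Gb) as [pb [Hpb Lb]].
  pose proof (conj_pow_mult Lam f a pa HL ba La pb) as LA.
  pose proof (conj_pow_mult Lam f b pb HL bb Lb (2 * pa)) as LB.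
  set (m := (pb * pa)%nat) in *. set (m' := (2 * pa * pb)%nat) in *.
  assert (Hm : (1 <= m)%nat) by (unfold m; nia).
  assert (Hm' : (1 <= m')%nat) by (unfold m'; nia).
  assert (Hmm : m <> m') by (unfold m, m'; nia).
  set (F := npow f). set (Fi := npow (finv f)).
  assert (LF : forall n, Lam (F n)) by (intros; apply sub_npow; auto).
  assert (LFi : forall n, Lam (Fi n)) by (intros; apply sub_npow; auto; apply sub_finv; auto).
  set (al := comp (F m) (comp (finv a) (Fi m))).
  set (be := comp (F m') (comp (finv b) (Fi m'))).
  set (U := comp (comp a (comp (F m) (finv a))) (Fi m)).
  set (V := comp (comp b (comp (F m') (finv b))) (Fi m')).
  assert (LU : Lam U) by (apply sub_comp; auto).
  assert (LV : Lam V) by (apply sub_comp; auto).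
  assert (bU : bij U) by (apply (sub_bij Lam); auto).
  assert (bV : bij V) by (apply (sub_bij Lam); auto).
  assert (bal : bij al). { apply bij_comp. apply (sub_bij Lam); auto. apply bij_comp. apply bij_finv; auto. apply (sub_bij Lam); auto. }
  assert (bbe : bij be). { apply bij_comp. apply (sub_bij Lam); auto. apply bij_comp. apply bij_finv; auto. apply (sub_bij Lam); auto. }
  assert (Tal : forall x, ~ B (Fi m x) -> al x = x).
  { intros x Hx. unfold al, comp. rewrite <- (Ta _ Hx) at 1. rewrite finv_l by auto.
    apply (npow_inv f bf). }
  assert (Tbe : forall x, ~ B (Fi m' x) -> be x = x).
  { intros x Hx. unfold be, comp. rewrite <- (Tb _ Hx) at 1. rewrite finv_l by auto.
    apply (npow_inv f bf). }
  assert (Ta' : forall x, ~ B (Fi 0 x) -> a x = x) by exact Ta.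
  assert (Tb' : forall x, ~ B (Fi 0 x) -> b x = x) by exact Tb.
  pose proof (disj_S f B bf Hw) as Dj.
  assert (C1 : forall x, be (a x) = a (be x)).
  { apply (commute_disj be a (fun x => B (Fi m' x)) (fun x => B (Fi 0 x))); auto.
    intros x; apply (Dj m' 0%nat); lia. }
  assert (C2 : forall x, be (al x) = al (be x)).
  { apply (commute_disj be al (fun x => B (Fi m' x)) (fun x => B (Fi m x))); auto.
    intros x; apply (Dj m' m); auto. }
  assert (C3 : forall x, al (b x) = b (al x)).
  { apply (commute_disj al b (fun x => B (Fi m x)) (fun x => B (Fi 0 x))); auto.
    intros x; apply (Dj m 0%nat); lia. }
  eapply memE; [|apply (sub_comp Lam _ _ HL (sub_comp Lam _ _ HL LU LV) (sub_comp Lam _ _ HL (sub_finv Lam _ HL LU) (sub_finv Lam _ HL LV)))].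
  intros x. set (y := finv U (finv V x)).
  assert (Ex : x = V (U y)) by (unfold y; rewrite finv_r, finv_r; auto).
  change (U (V y) = comp a (comp b (comp (finv a) (finv b))) x).
  clearbody y. rewrite Ex.
  change (U (V y)) with (a (al (b (be y)))).
  change (V (U y)) with (b (be (a (al y)))).
  rewrite C1, C2, C3. unfold comp. rewrite finv_l, finv_l by auto. reflexivity.
Qed.

Lemma conj_in {d k} (Lam G L : gset d k) g :
  subgroup Lam -> subgroup G -> commensurates G Lam -> subgroup L -> subset L Lam ->
  no_proper_finite_index_subgroup L -> G g -> forall l, L l -> Lam (comp g (comp l (finv g))).
Proof.
  intros HL HG Hcom HLs HLL Hnp Gg.
  assert (bg : bij g) by (apply (sub_bij G); auto).
  set (M := fun l => L l /\ Lam (comp g (comp l (finv g)))).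
  assert (KM : forall l, L l -> Kc Lam g l -> M l). { intros l Hl [_ K]; split; auto. }
  assert (MK : forall l, M l -> Kc Lam g l). { intros l [Hl K]; split; auto. }
  assert (HMs : subgroup M).
  { split; [|split; [|split]].
    - intros h [Hh _]. apply HLs; auto.
    - apply KM. apply sub_id; auto. apply Kc_id; auto.
    - intros x y Mx My. apply KM. apply sub_comp; auto. apply Mx. apply My. apply Kc_comp; auto.
    - intros x Mx. apply KM. apply sub_finv; auto. apply Mx. apply Kc_finv; auto. }
  assert (HMfi : finite_index M L).
  { destruct (Hcom (finv g) (sub_finv G g HG Gg)) as [reps [Hreps Hcov]].
    rewrite finv_finv in Hcov by auto.
    set (Pc := fun (t l : Ray d k -> Ray d k) => (L l /\ exists h, Kc Lam g h /\ l = comp t h) \/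
          (~ (exists l', L l' /\ exists h, Kc Lam g h /\ l' = comp t h) /\ l = (fun x => x))).
    set (ch := fun t => epsilon (inhabits (fun x : Ray d k => x)) (Pc t)).
    assert (Hch : forall t, Pc t (ch t)).
    { intros t. apply epsilon_spec. destruct (classic (exists l', L l' /\ exists h, Kc Lam g h /\ l' = comp t h)) as [[l' Hl']|Hn].
      - exists l'; left; auto.
      - exists (fun x => x); right; auto. }
    exists (map ch reps). split.
    - intros t' Ht'. apply in_map_iff in Ht'. destruct Ht' as [t [E _]]. subst t'.
      destruct (Hch t) as [[Hl _]|[_ E]]; auto. rewrite E. apply sub_id; auto.
    - intros x Lx. destruct (Hcov x (HLL x Lx)) as [t [Ht [h [Kh Ex]]]].
      assert (bt : bij t) by (apply (sub_bij Lam); auto).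
      destruct (Hch t) as [[Hl [h' [Kh' El]]]|[Hn _]].
      2:{ exfalso; apply Hn. exists x; split; eauto. }
      exists (ch t). split. apply in_map; auto.
      assert (bl : bij (ch t)) by (apply (sub_bij L); auto).
      assert (bh' : bij h') by (apply (sub_bij Lam); auto; apply Kh').
      exists (comp (finv (ch t)) x). split.
      + split. apply sub_comp; auto. apply sub_finv; auto.
        assert (Kq := Kc_comp Lam g _ _ HL bg (Kc_finv Lam g h' HL bg Kh') Kh).
        destruct Kq as [_ Kq]. eapply memE; [|exact Kq]. intros z. unfold comp. f_equal.
        rewrite El, Ex. rewrite (finv_unique (comp t h') (comp (finv h') (finv t))).
        unfold comp. rewrite finv_l; auto. apply bij_comp; auto.
        intros w; unfold comp. rewrite finv_l, finv_l; auto.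
      + extensionality z. unfold comp. rewrite finv_r; auto. }
  intros l Hl. apply (Hnp M HMs (fun l Hl => proj1 Hl) HMfi l Hl).
Qed.

Theorem mainTheorem16 (d k : nat) (Lam G : gset d k) :
  (2 <= d)%nat -> (2 <= k)%nat ->
  subgroup Lam -> subgroup G ->
  (exists h, Lam h /\ translation h) ->
  commensurates G Lam ->
  exists B : Ray d k -> Prop,
    proper_ball B /\
    subset (commutator_subgroup (rigid_stab G B)) Lam /\
    (forall L : gset d k,
        subgroup L ->
        subset L (commutator_subgroup (rigid_stab G B)) ->
        no_proper_finite_index_subgroup L ->
        subset (conj_closure G L) Lam).
Proof.
  intros Hd Hk HL HG Htr Hcom.
  destruct (wandering Hd Hk Lam HL Htr) as [f [Hf [B [HBp Hw]]]].
  exists B. split; auto.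
  assert (P1 : subset (commutator_subgroup (rigid_stab G B)) Lam).
  { intros x Hx. apply Hx; auto. intros z [a [b [[Ga Ta] [[Gb Tb] E]]]]. subst z.
    apply (comm_in Lam G f B); auto. }
  split; auto.
  intros L HLs HLsub Hnp x Hx. apply Hx; auto.
  intros z [g [l [Gg [Ll E]]]]. subst z.
  apply (conj_in Lam G L g); auto. intros y Hy; apply P1, HLsub, Hy.
Qed.
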